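(* Let $(S^\Omega,\mathcal T)$ be a resource theory with a fair currency $\mathcal C$ (value function $\mathrm{Val}$) for a target $\mathcal S$. Then for every $V\in\mathcal S$, $$\mathrm{Cost}(V)=-\mathrm{Balance}(\Omega\to V),\qquad \mathrm{Yield}(V)=\mathrm{Balance}(V\to\Omega).$$
   Context: A resource theory $(S^\Omega,\mathcal T)$ consists of a set $\Omega$, the specification space $S^\Omega$ of all non-empty subsets of $\Omega$ (resources), and a set $\mathcal T$ of maps $f:S^\Omega\to S^\Omega$ acting element-wise, $f(V)=\bigcup_{\nu\in V} f(\{\nu\})$. $V\to W$ iff some $f\in\mathcal T$ has $f(V)\subseteq W$; $\to$ is assumed to be a pre-order. $\mathcal C\subseteq S^\Omega$ is a currency for target $\mathcal S\subseteq S^\Omega$ if (Order) any two elements of $\mathcal C$ are comparable under $\to$ and $\Omega\in\mathcal C$; (Universality) $\Omega\in\mathcal S$ and every $V\in\mathcal S$ has $C,C'\in\mathcal C$ with $C\to V$, $V\to C'$. A value function $\mathrm{Val}:\mathcal C\to\mathbb R_{\ge0}$ satisfies $\mathrm{Val}(C')\ge\mathrm{Val}(C)\iff C'\to C$ and $\mathrm{Val}(\Omega)=0$; $c_{\sup}=\sup_{C\in\mathcal C}\mathrm{Val}(C)$ (possibly $\infty$). $\mathrm{Cost}(V)=\inf\{\mathrm{Val}(C): C\in\mathcal C,\ C\to V\}$, $\mathrm{Yield}(V)=\sup\{\mathrm{Val}(C): C\in\mathcal C,\ V\to C\}$. Independence: $C\cap V\ne\emptyset$ for all $C\in\mathcal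 C,V\in\mathcal S$, and $C\to C'$ implies $C\cap V\to C'\cap V$ for all $V\in\mathcal S$. Balance: $\mathrm{Balance}(V\to W\mid C)=\sup\{\mathrm{Val}(C')-\mathrm{Val}(C): C'\in\mathcal C,\ V\cap C\to W\cap C'\}$ (with $\sup\emptyset=-\infty$) and $\mathrm{Balance}(V\to W)=\sup_{C\in\mathcal C}\mathrm{Balance}(V\to W\mid C)$. Fairness: $\mathcal C$ is independent of $\mathcal S$, and for all $V,W\in\mathcal S$ and $C_1,C_2\in\mathcal C$ with $V\cap C_1\to W\cap C_2$, setting $\Delta=\mathrm{Val}(C_2)-\mathrm{Val}(C_1)$: (F1) for every $C_1'\in\mathcal C$ with $-\Delta\le\mathrm{Val}(C_1')<c_{\sup}-\Delta$ there is $C_2'\in\mathcal C$ with $V\cap C_1'\to W\cap C_2'$ and $\mathrm{Val}(C_2')-\mathrm{Val}(C_1')=\Delta$; (F2) for every $C_2'\in\mathcal C$ with $\Delta\le\mathrm{Val}(C_2')$ there is $C_1'\in\mathcal C$ with $V\cap C_1'\to W\cap C_2'$ and $\mathrm{Val}(C_2')-\mathrm{Val}(C_1')=\Delta$. *)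

(* Defs.v *)
From Stdlib Require Import Reals Lra Classical ClassicalEpsilon.
Open Scope R_scope.

Inductive Rbar : Type := Fin (r : R) | PInf | NInf.

Definition Rbar_le (x y : Rbar) : Prop :=
  match x, y with
  | NInf, _ => True
  | _, PInf => True
  | Fin a, Fin b => a <= b
  | _, _ => False
  end.

Definition Rbar_lt (x y : Rbar) : Prop := Rbar_le x y /\ x <> y.

Definition Rbar_opp (x : Rbar) : Rbar :=
  match x with Fin a => Fin (- a) | PInf => NInf | NInf => PInf end.

Definition is_sup (A : Rbar -> Prop) (s : Rbar) : Prop :=
  (forall x, A x -> Rbar_le x s) /\
  (forall u, (forall x, A x -> Rbar_le x u) -> Rbar_le s u).

Definition is_inf (A : Rbar -> Prop) (s : Rbar) : Prop :=
  (forall x, A x -> Rbar_le s x) /\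
  (forall u, (forall x, A x -> Rbar_le u x) -> Rbar_le u s).

Lemma exists_sup (A : Rbar -> Prop) : exists s, is_sup A s.
Proof.
  destruct (classic (A PInf)) as [HP|HP].
  { exists PInf; split; [intros [] _; simpl; auto|].
    intros u Hu; specialize (Hu _ HP); destruct u; simpl in *; tauto. }
  set (E := fun r => A (Fin r)).
  destruct (classic (exists r, E r)) as [Hne|Hne].
  - destruct (classic (bound E)) as [Hb|Hb].
    + destruct (completeness E Hb Hne) as [l [Hl1 Hl2]].
      exists (Fin l); split.
      * intros [a| |] Ha; simpl; auto; try (apply Hl1; exact Ha); contradiction.
      * intros [u| |] Hu; simpl; auto.
        -- apply Hl2; intros a Ha; exact (Hu (Fin a) Ha).
        -- destruct Hne as [r Hr]; exact (Hu (Fin r) Hr).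
    + exists PInf; split; [intros [] _; simpl; auto|].
      intros [u| |] Hu; simpl; auto.
      * apply Hb; exists u; intros a Ha; exact (Hu (Fin a) Ha).
      * destruct Hne as [r Hr]; exact (Hu (Fin r) Hr).
  - exists NInf; split.
    + intros [a| |] Ha; simpl; auto; try (apply Hne; exists a; exact Ha); contradiction.
    + intros; simpl; auto.
Qed.

Lemma exists_inf (A : Rbar -> Prop) : exists s, is_inf A s.
Proof.
  destruct (exists_sup (fun x => A (Rbar_opp x))) as [s [H1 H2]].
  assert (Hoo : forall x, Rbar_opp (Rbar_opp x) = x)
    by (intros [] ; simpl; f_equal; try ring; auto).
  assert (Hle : forall x y, Rbar_le x y -> Rbar_le (Rbar_opp y) (Rbar_opp x))
    by (intros [] []; simpl; auto; lra).
  exists (Rbar_opp s); split.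
  - intros x Hx. rewrite <- (Hoo x). apply Hle, H1. rewrite Hoo; exact Hx.
  - intros u Hu. rewrite <- (Hoo u). apply Hle, H2.
    intros x Hx. rewrite <- (Hoo x). apply Hle, Hu, Hx.
Qed.

(* Supremum / infimum in the extended reals (sup of the empty set = -oo). *)
Definition Esup (A : Rbar -> Prop) : Rbar :=
  proj1_sig (constructive_indefinite_description _ (exists_sup A)).
Definition Einf (A : Rbar -> Prop) : Rbar :=
  proj1_sig (constructive_indefinite_description _ (exists_inf A)).

Section RT.
Context {Omega : Type}.

Definition pset := Omega -> Prop.
Definition full : pset := fun _ => True.
Definition single (nu : Omega) : pset := fun x => x = nu.
Definition inter (V W : pset) : pset := fun x => V x /\ W x.
Definition subset (V W : pset) : Prop := forall x, V x -> W x.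
(* element of the specification space S^Omega: a non-empty subset *)
Definition resource (V : pset) : Prop := exists x, V x.

Definition elementwise (f : pset -> pset) : Prop :=
  (forall nu, resource (f (single nu))) /\
  (forall V x, f V x <-> exists nu, V nu /\ f (single nu) x).

Definition conv (T : (pset -> pset) -> Prop) (V W : pset) : Prop :=
  exists f, T f /\ subset (f V) W.

Definition preorder_on_resources (T : (pset -> pset) -> Prop) : Prop :=
  (forall V, resource V -> conv T V V) /\
  (forall U V W, resource U -> resource V -> resource W ->
     conv T U V -> conv T V W -> conv T U W).

Definition is_currency (T : (pset -> pset) -> Prop) (Cur S : pset -> Prop) : Prop :=
  (forall C, Cur C -> resource C) /\ (forall V, S V -> resource V) /\
  (forall C C', Cur C -> Cur C' -> conv T C C' \/ conv T C' C) /\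
  Cur full /\
  S full /\
  (forall V, S V -> exists C C', Cur C /\ Cur C' /\ conv T C V /\ conv T V C').

Definition is_value_function (T : (pset -> pset) -> Prop) (Cur : pset -> Prop)
  (Val : pset -> R) : Prop :=
  (forall C, Cur C -> 0 <= Val C) /\
  (forall C C', Cur C -> Cur C' -> (Val C' >= Val C <-> conv T C' C)) /\
  Val full = 0.

Definition c_sup (Cur : pset -> Prop) (Val : pset -> R) : Rbar :=
  Esup (fun b => exists C, Cur C /\ b = Fin (Val C)).

Definition Cost T Cur (Val : pset -> R) (V : pset) : Rbar :=
  Einf (fun b => exists C, Cur C /\ conv T C V /\ b = Fin (Val C)).

Definition Yield T Cur (Val : pset -> R) (V : pset) : Rbar :=
  Esup (fun b => exists C, Cur C /\ conv T V C /\ b = Fin (Val C)).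

Definition independent T (Cur S : pset -> Prop) : Prop :=
  (forall C V, Cur C -> S V -> resource (inter C V)) /\
  (forall C C' V, Cur C -> Cur C' -> S V -> conv T C C' ->
     conv T (inter C V) (inter C' V)).

Definition BalanceGiven T Cur (Val : pset -> R) (V W C : pset) : Rbar :=
  Esup (fun b => exists C', Cur C' /\ conv T (inter V C) (inter W C') /\
                   b = Fin (Val C' - Val C)).

Definition Balance T Cur (Val : pset -> R) (V W : pset) : Rbar :=
  Esup (fun b => exists C, Cur C /\ b = BalanceGiven T Cur Val V W C).

Definition fair T (Cur S : pset -> Prop) (Val : pset -> R) : Prop :=
  independent T Cur S /\
  forall V W C1 C2, S V -> S W -> Cur C1 -> Cur C2 ->
    conv T (inter V C1) (inter W C2) ->
    let Delta := Val C2 - Val C1 in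
    (* (F1) *)
    (forall C1', Cur C1' -> - Delta <= Val C1' ->
        Rbar_lt (Fin (Val C1')) (match c_sup Cur Val with
                                 | Fin c => Fin (c - Delta) | x => x end) ->
        exists C2', Cur C2' /\ conv T (inter V C1') (inter W C2') /\
                    Val C2' - Val C1' = Delta) /\
    (* (F2) *)
    (forall C2', Cur C2' -> Delta <= Val C2' ->
        exists C1', Cur C1' /\ conv T (inter V C1') (inter W C2') /\
                    Val C2' - Val C1' = Delta).

End RT.

(* Main.v *)
Require Import Defs.
From Stdlib Require Import Reals Lra ClassicalEpsilon.
Open Scope R_scope.

Lemma Esup_spec A : is_sup A (Esup A).
Proof. unfold Esup; destruct (constructive_indefinite_description _ _); auto. Qed.
Lemma Einf_spec A : is_inf A (Einf A).
Proof. unfold Einf; destruct (constructive_indefinite_description _ _); auto. Qed.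

Lemma le_antisym x y : Rbar_le x y -> Rbar_le y x -> x = y.
Proof. destruct x, y; simpl; intros; try tauto. f_equal; lra. Qed.
Lemma le_trans x y z : Rbar_le x y -> Rbar_le y z -> Rbar_le x z.
Proof. destruct x, y, z; simpl; intros; try tauto; lra. Qed.
Lemma le_opp x y : Rbar_le x y -> Rbar_le (Rbar_opp y) (Rbar_opp x).
Proof. destruct x, y; simpl; intros; try tauto; lra. Qed.
Lemma opp_opp x : Rbar_opp (Rbar_opp x) = x.
Proof. destruct x; simpl; auto. f_equal; ring. Qed.

Lemma le_sup A x : A x -> Rbar_le x (Esup A).
Proof. intros; apply (proj1 (Esup_spec A)); auto. Qed.
Lemma sup_le A u : (forall x, A x -> Rbar_le x u) -> Rbar_le (Esup A) u.
Proof. intros; apply (proj2 (Esup_spec A)); auto. Qed.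
Lemma inf_le A x : A x -> Rbar_le (Einf A) x.
Proof. intros; apply (proj1 (Einf_spec A)); auto. Qed.
Lemma le_inf A u : (forall x, A x -> Rbar_le u x) -> Rbar_le u (Einf A).
Proof. intros; apply (proj2 (Einf_spec A)); auto. Qed.

Section M.
Context {Omega : Type} (T : (@pset Omega -> @pset Omega) -> Prop)
  (HT : forall f, T f -> elementwise f).

Lemma conv_mono (X Y X' Y' : pset) : conv T X Y ->
  (forall x, X' x -> X x) -> (forall y, Y y -> Y' y) -> conv T X' Y'.
Proof.
  intros [f [Hf Hs]] H1 H2. exists f; split; auto.
  intros x Hx. apply H2, Hs. destruct (HT f Hf) as [_ He].
  apply He in Hx. destruct Hx as [nu [Hn Hx]]. apply He. eauto.
Qed.
End M.

Theorem mainTheorem9 (Omega : Type)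
  (T : (@pset Omega -> @pset Omega) -> Prop)
  (Cur S : @pset Omega -> Prop) (Val : @pset Omega -> R)
  (HT : forall f, T f -> elementwise f)
  (Hpre : preorder_on_resources T)
  (Hcur : is_currency T Cur S)
  (Hval : is_value_function T Cur Val)
  (Hfair : fair T Cur S Val) :
  forall V, S V ->
    Cost T Cur Val V = Rbar_opp (Balance T Cur Val full V) /\
    Yield T Cur Val V = Balance T Cur Val V full.
Proof.
  intros V HV.
  destruct Hcur as (HCr & HSr & Hord & Hfull & HSfull & Huniv).
  destruct Hval as (Hv0 & Hvc & Hvfull).
  destruct Hfair as [[Hind1 Hind2] HF].
  destruct Hpre as [Hrefl Htrans].
  split.
  -
    assert (HB : forall D, Cur D -> conv T D V ->
                 Rbar_le (Fin (- Val D)) (Balance T Cur Val full V)).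
    { intros D HD Hc. eapply le_trans; [| apply le_sup; exists D; split; [exact HD| reflexivity]].
      apply le_sup. exists full. split; [exact Hfull|]. split.
      - refine (conv_mono T HT _ _ _ _ Hc _ _). intros x [_ Hx]; exact Hx. intros y Hy; split; [exact Hy| exact I].
      - rewrite Hvfull. f_equal; ring. }
    unfold Cost. apply le_antisym.
    + rewrite <- (opp_opp (Einf _)). apply le_opp.
      apply sup_le. intros x [C [HC ->]]. apply sup_le.
      intros y [C' [HC' [Hc ->]]].
      assert (HCC' : conv T C C').
      { refine (conv_mono T HT _ _ _ _ Hc _ _). intros x Hx; split; [exact I|exact Hx]. intros y [_ Hy]; exact Hy. }
      assert (Hle : Val C' <= Val C).
      { apply Rge_le. apply (proj2 (Hvc C' C HC' HC)). exact HCC'. }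
      destruct (HF full V C C' HSfull HV HC HC' Hc) as [_ HF2].
      destruct (HF2 full Hfull) as [C1 [HC1 [Hc1 Heq]]].
      { rewrite Hvfull; lra. }
      replace (Val C' - Val C) with (- Val C1) by (rewrite Hvfull in Heq; lra).
      change (Fin (- Val C1)) with (Rbar_opp (Fin (Val C1))).
      apply le_opp. apply inf_le. exists C1. repeat split; auto.
      refine (conv_mono T HT _ _ _ _ Hc1 _ _). intros x Hx; split; [exact I|exact Hx]. intros y [Hy _]; exact Hy.
    + apply le_inf. intros x [D [HD [Hc ->]]].
      rewrite <- (opp_opp (Fin (Val D))). apply le_opp. apply HB; auto.
  -
    assert (HY0 : Rbar_le (Fin 0) (Yield T Cur Val V)).
    { destruct (Huniv V HV) as (C & C' & HC & HC' & _ & Hc').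
      eapply le_trans; [| apply le_sup; exists C'; repeat split; eauto].
      simpl. apply Hv0; auto. }
    apply le_antisym.
    + apply sup_le. intros x [C [HC [Hc ->]]].
      eapply le_trans; [| apply le_sup; exists full; split; [exact Hfull| reflexivity]].
      apply le_sup. exists C. split; [exact HC|]. split.
      * refine (conv_mono T HT _ _ _ _ Hc _ _). intros y [Hy _]; exact Hy. intros y Hy; split; [exact I|exact Hy].
      * rewrite Hvfull. f_equal; ring.
    + apply sup_le. intros x [C [HC ->]]. apply sup_le.
      intros y [C' [HC' [Hc ->]]].
      destruct (Rlt_or_le (Val C' - Val C) 0) as [Hneg|Hpos].
      { eapply le_trans; [|exact HY0]. simpl; lra. }
      pose proof (Hv0 C HC) as HC0.
      destruct (Rle_lt_or_eq_dec 0 (Val C) HC0) as [Hlt|Heq0].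
      * destruct (HF V full C C' HV HSfull HC HC' Hc) as [HF1 _].
        destruct (HF1 full Hfull) as [C2 [HC2 [Hc2 Heq]]].
        { rewrite Hvfull; lra. }
        { rewrite Hvfull.
          assert (Hcs : Rbar_le (Fin (Val C')) (c_sup Cur Val))
            by (apply le_sup; exists C'; auto).
          destruct (c_sup Cur Val) as [c| |]; simpl in Hcs.
          - split; simpl; [lra|]. intro H; injection H; lra.
          - split; simpl; [exact I| discriminate].
          - contradiction. }
        replace (Val C' - Val C) with (Val C2) by (rewrite Hvfull in Heq; lra).
        apply le_sup. exists C2. repeat split; auto.
        refine (conv_mono T HT _ _ _ _ Hc2 _ _). intros z Hz; split; [exact Hz|exact I]. intros z [_ Hz]; exact Hz.
      * assert (HfC : conv T full C).
        { apply (proj1 (Hvc C full HC Hfull)). rewrite Hvfull, <- Heq0. lra. }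
        pose proof (Hind2 full C V Hfull HC HV HfC) as H1.
        assert (H1' : conv T V (inter V C)).
        { refine (conv_mono T HT _ _ _ _ H1 _ _). intros z Hz; split; [exact I|exact Hz].
          intros z [Hz1 Hz2]; split; assumption. }
        assert (H2 : conv T (inter V C) C').
        { refine (conv_mono T HT _ _ _ _ Hc _ _). intros z Hz; exact Hz. intros z [_ Hz]; exact Hz. }
        assert (Hr : resource (inter V C)).
        { destruct (Hind1 C V HC HV) as [z [Hz1 Hz2]]. exists z; split; assumption. }
        pose proof (Htrans V (inter V C) C' (HSr V HV) Hr (HCr C' HC') H1' H2) as H3.
        rewrite <- Heq0. replace (Val C' - 0) with (Val C') by ring.
        apply le_sup. exists C'; auto.
Qed.
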